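(* Let $G=\mathbb Z\wr\mathbb Z=\langle a\rangle\wr\langle b\rangle$. Then $\mathrm{pw}(G,\{a,b\})=3$.
   Context: $a$ generates the first (base) infinite cyclic factor and $b$ the second (acting) infinite cyclic factor of the restricted wreath product. A palindrome in a group generated by $X$ is an element represented by a reduced word in $X^{\pm1}$ reading the same forwards and backwards; $l_{\mathcal P}(g)$ is the minimal number of palindromes whose product is $g$; $\mathrm{pw}(G,X)=\sup_{g\in G}l_{\mathcal P}(g)$. *)

(* Defs.v *)
From mathcomp Require Import all_boot all_order all_algebra.
Set Implicit Arguments. Unset Strict Implicit. Unset Printing Implicit Defensive.
Import Order.TTheory GRing.Theory Num.Theory.
Local Open Scope ring_scope.

(* Z wr Z = <a> wr <b>, realised inside the (unrestricted) semidirect product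
   (int -> int) x| int, with (f,m)(g,n) = (x |-> f x + g (x - m), m + n).
   The restricted wreath product is the subgroup generated by
   a = (delta_0, 0) and b = (0, 1), i.e. the set of values of words. *)
Definition W := ((int -> int) * int)%type.

Definition wmul (x y : W) : W :=
  (fun t => x.1 t + y.1 (t - x.2), x.2 + y.2).
Definition wone : W := (fun _ => 0, 0).
Definition wa : W := (fun t => if t == 0 then 1 else 0, 0).
Definition wb : W := (fun _ => 0, 1).
Definition wainv : W := (fun t => if t == 0 then -1 else 0, 0).
Definition wbinv : W := (fun _ => 0, -1).

(* Letters of X^{+-1}, X = {a, b}: (is_b, is_inverse). *)
Definition letter := (bool * bool)%type.
Definition linv (l : letter) : letter := (l.1, ~~ l.2).
Definition leval (l : letter) : W :=
  match l with
  | (false, false) => wa | (false, true) => wainv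
  | (true, false) => wb  | (true, true) => wbinv
  end.
Definition weval (w : seq letter) : W := foldr (fun l x => wmul (leval l) x) wone w.

Definition inG (x : W) : Prop := exists w : seq letter, weval w = x.

Definition reduced (w : seq letter) : bool := sorted (fun l l' => l' != linv l) w.
Definition palword (w : seq letter) : bool := rev w == w.

Definition palindrome (x : W) : Prop :=
  exists w : seq letter, [/\ reduced w, palword w & weval w = x].

Definition pal_length_le (x : W) (k : nat) : Prop :=
  exists ps : seq W, [/\ (size ps <= k)%N, foldr (fun p P => palindrome p /\ P) True ps
                       & x = foldr wmul wone ps].

Definition pw_is (n : nat) : Prop :=
  (forall x, inG x -> pal_length_le x n) /\
  (forall m : nat, (forall x, inG x -> pal_length_le x m) -> (n <= m)%N).

(* Main.v *)
Require Import Defs.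
From mathcomp Require Import all_boot all_order all_algebra.
From mathcomp Require Import zify ring.
From Stdlib Require Import FunctionalExtensionality.
Set Implicit Arguments. Unset Strict Implicit. Unset Printing Implicit Defensive.
Import Order.TTheory GRing.Theory Num.Theory.
Local Open Scope ring_scope.

Lemma Weq (x y : W) : (forall t, x.1 t = y.1 t) -> x.2 = y.2 -> x = y.
Proof.
case: x => f m; case: y => g n /= H1 H2; rewrite H2; congr pair.
exact: functional_extensionality.
Qed.

Lemma wmulA x y z : wmul x (wmul y z) = wmul (wmul x y) z.
Proof.
apply: Weq => [t|] /=; last by rewrite addrA.
rewrite addrA; congr (_ + _); congr (z.1 _); rewrite opprD addrA //.
Qed.

Lemma wmul1 x : wmul x wone = x.
Proof. by apply: Weq => [t|] /=; rewrite addr0. Qed.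

Lemma w1mul x : wmul wone x = x.
Proof. by apply: Weq => [t|] /=; rewrite ?add0r ?subr0. Qed.

Lemma linvK l : linv (linv l) = l.
Proof. by case: l => [] [] []. Qed.

Lemma linv_neq l : l != linv l.
Proof. by case: l => [] [] []. Qed.

Lemma wmul_linv l : wmul (leval l) (leval (linv l)) = wone.
Proof.
case: l => [] [] []; apply: Weq => [t|] //=; rewrite ?subr0;
  by case: (t == 0).
Qed.

Lemma weval_rcons r l : weval (rcons r l) = wmul (weval r) (leval l).
Proof.
elim: r => [|x r IH] /=; first by rewrite wmul1 w1mul.
by rewrite IH wmulA.
Qed.

Lemma pal_split r : palword r ->
  r = [::] \/ (exists x, r = [:: x]) \/ exists x r2, r = x :: rcons r2 x /\ palword r2.
Proof.
case: r => [|x r1]; first by left.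
case/lastP: r1 => [|r2 y]; first by right; left; exists x.
rewrite /palword rev_cons rev_rcons => /eqP [] <- H; right; right.
exists y, r2; split => //; apply/eqP.
by have [->] := rcons_inj H.
Qed.

Lemma wcancel l z : wmul (leval l) (wmul (leval (linv l)) z) = z.
Proof. by rewrite wmulA wmul_linv w1mul. Qed.

Lemma weval_cons x s : weval (x :: s) = wmul (leval x) (weval s).
Proof. by []. Qed.

Lemma wmul_linv' l : wmul (leval (linv l)) (leval l) = wone.
Proof. by rewrite -{2}(linvK l) wmul_linv. Qed.

Lemma pal_wrap l y : palindrome y -> palindrome (wmul (leval l) (wmul y (leval l))).
Proof.
case=> r [Hr Hp Hv].
have Hlx : forall x, x != linv l -> l != linv x.
  by move=> x; apply: contra => /eqP ->; rewrite linvK.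
have Hgen : forall x r2, r = x :: r2 -> x != linv l -> last x r2 = x ->
    palindrome (wmul (leval l) (wmul y (leval l))).
  move=> x r2 Er Hx Hlast; exists (l :: rcons r l); split.
  - rewrite /reduced Er /= rcons_path.
    move: Hr; rewrite /reduced Er /= => ->; rewrite Hx /=.
    by rewrite Hlast Hlx.
  - by rewrite /palword rev_cons rev_rcons; move/eqP: Hp => ->.
  - by rewrite /= weval_rcons Hv.
case: (pal_split Hp) => [Er|[[x Er]|[x [r2 [Er Hp2]]]]].
- exists [:: l; l]; split.
  + by rewrite /reduced /= andbT; apply/negP => /eqP H; move: (linv_neq l); rewrite -H eqxx.
  + by rewrite /palword /rev /= eqxx.
  + by rewrite /= -Hv Er /= wmul1 w1mul.
- have [Ex|Hx] := eqVneq x (linv l).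
    exists [:: l]; split => //; first by rewrite /palword /rev /= eqxx.
    by rewrite -Hv Er Ex /= !wmul1 wcancel.
  by apply: (Hgen x [::]).
- have [Ex|Hx] := eqVneq x (linv l).
    exists r2; split => //.
      by move: Hr; rewrite /reduced Er /= rcons_path => /andP [/path_sorted].
    rewrite -Hv Er weval_cons weval_rcons Ex -wmulA wcancel -wmulA wmul_linv' wmul1 //.
  by apply: (Hgen x (rcons r2 x)) => //; rewrite last_rcons.
Qed.

Lemma nseq_red l n : reduced (nseq n l).
Proof.
rewrite /reduced; case: n => //= n; elim: n => //= n ->; rewrite andbT.
by apply/negP => /eqP H; move: (linv_neq l); rewrite -H eqxx.
Qed.

Lemma nseq_palw l n : palword (nseq n l).
Proof. by rewrite /palword rev_nseq. Qed.

Lemma apow_nat (n : nat) :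
  palindrome (fun t => if t == 0 then n%:Z else 0, 0) /\
  palindrome (fun t => if t == 0 then - n%:Z else 0, 0).
Proof.
have E : forall b : bool, weval (nseq n (false, b)) =
   (fun t => if t == 0 then (if b then - n%:Z else n%:Z) else 0, 0).
  case; elim: n => [|n IH]; try by apply: Weq => [t|] //=; case: (t == 0).
    rewrite /= -/(weval _) IH; apply: Weq => [t|] //=; rewrite ?subr0 ?addr0.
    by case: (t == 0) => //; lia.
  rewrite /= -/(weval _) IH; apply: Weq => [t|] //=; rewrite ?subr0 ?addr0.
  by case: (t == 0) => //; lia.
split; [exists (nseq n (false,false)) | exists (nseq n (false,true))];
  by rewrite nseq_red nseq_palw E.
Qed.

Lemma apow (e : int) : palindrome (fun t => if t == 0 then e else 0, 0).
Proof.
case: e => n; first by case: (apow_nat n).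
by rewrite NegzE; case: (apow_nat n.+1).
Qed.

Lemma bpow (m : int) : palindrome (fun _ => 0, m).
Proof.
have E : forall (n : nat) (b : bool), weval (nseq n (true, b)) =
   (fun _ => 0, if b then - n%:Z else n%:Z).
  move=> n; case; elim: n => [|n IH]; try by apply: Weq => [t|] //=.
    rewrite /= -/(weval _) IH; apply: Weq => [t|] //=; rewrite ?addr0; lia.
  rewrite /= -/(weval _) IH; apply: Weq => [t|] //=; rewrite ?addr0; lia.
case: m => n.
  by exists (nseq n (true,false)); rewrite nseq_red nseq_palw E.
by exists (nseq n.+1 (true,true)); rewrite nseq_red nseq_palw E NegzE.
Qed.

Definition aw (e : int) (y : W) : W :=
  (fun t => y.1 t + (if t == 0 then e else 0) + (if t == y.2 then e else 0), y.2).

Lemma aw_pal_nat y (n : nat) : palindrome y -> palindrome (aw n%:Z y) /\ palindrome (aw (- n%:Z) y).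
Proof.
move=> Hy; elim: n => [|n [IH1 IH2]].
  have E0 : aw 0 y = y by apply: Weq => [t|] //=; case: (t == 0); case: (t == y.2); rewrite !addr0.
  by rewrite ?oppr0 E0.
split.
  have -> : aw n.+1%:Z y = wmul (leval (false,false)) (wmul (aw n%:Z y) (leval (false,false))).
    apply: Weq => [t|] /=; last by rewrite !addr0 add0r.
    rewrite !subr0 subr_eq0; case: (t == 0); case: (t == y.2); lia.
  exact: pal_wrap.
have -> : aw (- n.+1%:Z) y = wmul (leval (false,true)) (wmul (aw (- n%:Z) y) (leval (false,true))).
  apply: Weq => [t|] /=; last by rewrite !addr0 add0r.
  rewrite !subr0 subr_eq0; case: (t == 0); case: (t == y.2); lia.
exact: pal_wrap.
Qed.

Lemma aw_pal y e : palindrome y -> palindrome (aw e y).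
Proof.
move=> Hy; case: e => n; first by case: (aw_pal_nat n Hy).
by rewrite NegzE; case: (aw_pal_nat n.+1 Hy).
Qed.

Definition mu (m lo : int) : nat :=
  if m < 2 * lo then 0%N else (absz (m - 2 * lo)%R * 3 + absz lo + 1)%N.

Lemma sym_pal n : forall (m lo : int) (f : int -> int), (mu m lo <= n)%N ->
  (forall t, f (m - t) = f t) -> (forall t, (t < lo) || (m - lo < t) -> f t = 0) ->
  palindrome (f, m).
Proof.
elim: n => [|n IH] m lo f Hmu Hs Hw.
  have Hlt : m < 2 * lo.
    by move: Hmu; rewrite /mu; case: ifP => // _; lia.
  have -> : (f, m) = (fun _ => 0, m).
    by apply: Weq => [t|] //=; apply: Hw; lia.
  exact: bpow.
have [Hlt|Hge] := boolP (m < 2 * lo).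
  have -> : (f, m) = (fun _ => 0, m).
    by apply: Weq => [t|] //=; apply: Hw; lia.
  exact: bpow.
have Hmu' : (absz (m - 2 * lo)%R * 3 + absz lo + 1 <= n.+1)%N.
  by move: Hmu; rewrite /mu (negbTE Hge).
have [Hl|Hl] := boolP (lo < 0).
  have Py : palindrome (fun t => f (t - 1), m + 2).
    apply: (IH _ (lo + 1)).
    - rewrite /mu; have -> : (m + 2 < 2 * (lo + 1)) = false by lia.
      lia.
    - by move=> t; rewrite -(Hs (t - 1)); congr (f _); ring.
    - by move=> t Ht; apply: Hw; lia.
  have -> : (f, m) = wmul (leval (true,true)) (wmul (fun t => f (t - 1), m + 2) (leval (true,true))).
    apply: Weq => [t|] /=; last by lia.
    by rewrite add0r addr0; congr (f _); ring.
  exact: pal_wrap.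
have [Hp|Hz] := boolP (0 < lo).
  have Py : palindrome (fun t => f (t + 1), m - 2).
    apply: (IH _ (lo - 1)).
    - rewrite /mu; have -> : (m - 2 < 2 * (lo - 1)) = false by lia.
      lia.
    - by move=> t; rewrite -(Hs (t + 1)); congr (f _); ring.
    - by move=> t Ht; apply: Hw; lia.
  have -> : (f, m) = wmul (leval (true,false)) (wmul (fun t => f (t + 1), m - 2) (leval (true,false))).
    apply: Weq => [t|] /=; last by lia.
    by rewrite add0r addr0; congr (f _); ring.
  exact: pal_wrap.
have Hl0 : lo = 0 by lia.
subst lo.
have [Hm0|Hm0] := eqVneq m 0.
  subst m.
  have -> : ((f, 0) : W) = ((fun t => if t == 0 then f 0 else 0, 0) : W).
    apply: Weq => [t|] //=.
    have [->|h0] := eqVneq t 0; first by [].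
    by apply: Hw; lia.
  exact: apow.
set e := f 0.
pose g := fun t => f t - (if t == 0 then e else 0) - (if t == m then e else 0).
have Py : palindrome (g, m).
  apply: (IH _ 1).
  - rewrite /mu; case: ifP => // Hc; move/negbT: Hc => Hc; lia.
  - move=> t; rewrite /g Hs.
    have -> : (m - t == 0) = (t == m) by apply/eqP/eqP; lia.
    have -> : (m - t == m) = (t == 0) by apply/eqP/eqP; lia.
    ring.
  - move=> t Ht; rewrite /g.
    have [->|h0] := eqVneq t 0.
      by rewrite eq_sym (negbTE Hm0) /e subrr subr0.
    have [->|hm] := eqVneq t m.
      by rewrite subr0 /e -{1}(subr0 m) Hs subrr.
    by rewrite Hw ?subr0 //; lia.
have -> : (f, m) = aw e (g, m).
  by apply: Weq => [t|] //=; rewrite /g; ring.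
exact: aw_pal.
Qed.

Lemma weval_supp w : exists N : nat, forall t : int, (N < absz t)%N -> (weval w).1 t = 0.
Proof.
elim: w => [|l w [N HN]]; first by exists 0%N.
exists N.+1 => t Ht; rewrite weval_cons /=.
have Ht0 : (t == 0) = false by apply/negbTE/eqP => h; lia.
move: (weval w) HN => z HN.
case: l => [[] []] /=; rewrite ?Ht0 ?add0r HN //; lia.
Qed.

Lemma upper x : inG x -> pal_length_le x 3.
Proof.
case=> w <-.
have [N HN] := weval_supp w.
move: (weval w) HN => [F M] /= HN.
pose G (n : nat) := \sum_(n <= s < N.+1) (F s%:Z - F (- s%:Z)).
have G0 : forall n, (N < n)%N -> G n = 0 by move=> n Hn; rewrite /G big_geq.
have Grec : forall n, G n = (F n%:Z - F (- n%:Z)) + G n.+1.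
  move=> n; case: (leqP n N) => Hn.
    by rewrite /G big_ltn.
  have F1 : F n%:Z = 0 by apply: HN; lia.
  have F2 : F (- n%:Z) = 0 by apply: HN; lia.
  rewrite F1 F2 subrr add0r !G0 //; lia.
pose g2 t := if 0 < t then G (absz t) else G (absz (1 - t)).
pose g1 t := F t - g2 t.
have key : forall t, 0 < t -> g1 (- t) = g1 t.
  move=> t Ht; rewrite /g1 /g2 Ht.
  have -> : (0 < - t) = false by lia.
  have -> : absz (1 - - t) = (absz t).+1 by lia.
  rewrite (Grec (absz t)).
  have -> : (absz t)%:Z = t by lia.
  ring.
have s1 : forall t, g1 (0 - t) = g1 t.
  move=> t; rewrite sub0r.
  have [Ht|Ht] := boolP (0 < t); first exact: key.
  have [->|Ht0] := eqVneq t 0; first by rewrite oppr0.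
  by rewrite -(key (- t)) ?opprK //; lia.
have s2 : forall t, g2 (1 - t) = g2 t.
  move=> t; rewrite /g2.
  have [Ht|Ht] := boolP (0 < t).
    have -> : (0 < 1 - t) = false by lia.
    by have -> : 1 - (1 - t) = t by ring.
  by have -> : (0 < 1 - t) = true by lia.
have w2' : forall t, (N < absz t)%N -> g2 t = 0.
  move=> t Ht; rewrite /g2; case: ifP => H; rewrite G0 //; lia.
have w2 : forall t, (t < - (N.+1)%:Z) || (1 - - (N.+1)%:Z < t) -> g2 t = 0.
  move=> t Ht; apply: w2'; lia.
have w1 : forall t, (t < - (N.+1)%:Z) || (0 - - (N.+1)%:Z < t) -> g1 t = 0.
  move=> t Ht; rewrite /g1 w2'; last by lia.
  rewrite HN ?subr0 //; lia.
exists [:: (g1, 0); (g2, 1); (fun _ => 0, M - 1)]; split => //=.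
  split; first exact: (@sym_pal _ 0 _ g1 (leqnn _) s1 w1).
  split; first exact: (@sym_pal _ 1 _ g2 (leqnn _) s2 w2).
  by split => //; apply: bpow.
apply: Weq => [t|] /=; last by ring.
by rewrite /g1 subr0 !addr0 subrK.
Qed.

Definition sig (x : W) : W := (fun t => x.1 (x.2 - t), x.2).

Lemma sig_mul x y : sig (wmul x y) = wmul (sig y) (sig x).
Proof.
apply: Weq => [t|] /=; last by rewrite addrC.
rewrite addrC; congr (_ + _); [congr (y.1 _) | congr (x.1 _)]; ring.
Qed.

Lemma sig_leval l : sig (leval l) = leval l.
Proof.
case: l => [[] []]; apply: Weq => [t|] //=; rewrite ?sub0r ?oppr_eq0 //.
Qed.

Lemma weval_rev w : weval (rev w) = sig (weval w).
Proof.
elim: w => [|l w IH].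
  by apply: Weq => [t|] //=.
by rewrite rev_cons weval_rcons IH weval_cons sig_mul sig_leval.
Qed.

Lemma pal_sym p : palindrome p -> forall t, p.1 (p.2 - t) = p.1 t.
Proof.
case=> w [_ /eqP Hp <-] t.
have E : sig (weval w) = weval w by rewrite -weval_rev Hp.
by have := congr1 (fun z : W => z.1 t) E.
Qed.

Definition x0 : W := weval [:: (false,false); (true,false); (false,false); (false,false); (true,true)].

Lemma x0E t : x0.1 t = (if t == 0 then 1 else 0) + (if t == 1 then 2 else 0).
Proof.
rewrite /x0 /= !subr0 !add0r ?addr0.
have -> : (t - 1 == 0) = (t == 1) by rewrite subr_eq0.
by case: (t == 0); case: (t == 1).
Qed.

Lemma x02 : x0.2 = 0.
Proof. by []. Qed.

Lemma lower m : (forall x, inG x -> pal_length_le x m) -> (3 <= m)%N.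
Proof.
move=> H; rewrite leqNgt; apply/negP => Hm.
have [ps [Hs Hp Hx]] := H x0 (ex_intro _ _ erefl).
case: ps Hs Hp Hx => [|p [|q [|r ps]]] /= Hs Hp Hx.
- by have := x0E 0; rewrite Hx.
- case: Hp => Hp _.
  have E1 : forall t, x0.1 t = p.1 t by move=> t; rewrite Hx /= addr0.
  have E2 : p.2 = 0 by have := x02; rewrite Hx /= addr0.
  have := pal_sym Hp 1; rewrite E2 -!E1 !x0E; by [].
- case: Hp => Hp [Hq _].
  have E1 : forall t, x0.1 t = p.1 t + q.1 (t - p.2) by move=> t; rewrite Hx /= addr0.
  have E2 : p.2 + q.2 = 0 by have := x02; rewrite Hx /= addr0.
  have S : forall t, x0.1 (p.2 - t) = x0.1 t.
    move=> t; rewrite !E1 (pal_sym Hp) -(pal_sym Hq (t - p.2)).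
    congr (_ + q.1 _); lia.
  have [h|h] := eqVneq p.2 0.
    by have := S 1; rewrite h sub0r !x0E.
  have := S 0; rewrite subr0 !x0E (negbTE h).
  by case: (p.2 == 1).
- lia.
Qed.

Theorem theorem5p7 : pw_is 3.
Proof.
split; [exact: upper | exact: lower].
Qed.
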